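(* Consider hopped iterated learning in the Gaussian setting with prior $N(\bar\mu,\bar\sigma^2)$, likelihood $N(h,\sigma^2)$, and initial teacher distribution $N(\mu_0,\sigma_0^2)$, where $\mu_0\neq\bar\mu$. For every constant $c>0$ there is a constant $B_c$ depending only on $c$ such that for any $0<\varepsilon<|\mu_0-\bar\mu|$, the sample size sequence $$m_t=B_c\frac{|\mu_0-\bar\mu|}{\varepsilon}\Bigl(\frac{\sigma}{\bar\sigma}\Bigr)^2(1+\log t)^{1+c}$$ makes hopped iterated learning $\varepsilon$-self-sustaining, i.e., $|\mathbb E\mu_t-\mu_0|\le\varepsilon$ for all $t$ and $\sigma_t^2+\operatorname{Var}\mu_t$ remains bounded over all $t$.
   Context: Gaussian setting: hypotheses $h\in\mathbb R$; every learner has prior $N(\bar\mu,\bar\sigma^2)$; data generated from $h$ is $h+\phi$ with $\phi\sim N(0,\sigma^2)$. Learner $0$ is the original teacher with posterior $N(\mu_0,\sigma_0^2)$ ($\mu_0$ deterministic). Write $\tau=1/\sigma^2$, $\bar\tau=1/\bar\sigma^2$, $\beta_t=m_t\tau/(\bar\tau+m_t\tau)$. Hopped learning: learner $t\ge1$ picks a teacher $s$ uniformly at random from $\{0,1,\dots,t-1\}$ (indicator $\chi_{t,s}$), independently of everything else, and receives data $d_{t,s,1},\dots,d_{t,s,m_t}$ from teacher $s$; these are mutually independent, each distributed as $N(\mathbb E\mu_s,\operatorname{Var}\mu_s+\sigma_s^2+\sigma^2)$, and data for different teachers are independent. The learner's posterior is $N(\mu_t,\sigma_t^2)$ with $\mu_t=\frac{\beta_t}{m_t}\sum_{s=0}^{t-1}\chi_{t,s}\sum_{i=1}^{m_t}d_{t,s,i}+(1-\beta_t)\bar\mu$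 and $1/\sigma_t^2=\bar\tau+m_t\tau$. The logarithm may be taken to any fixed base greater than $1$ (the base only affects $B_c$). *)

(* Defs.v *)
From HB Require Import structures.
From mathcomp Require Import all_boot all_order all_algebra.
From mathcomp Require Import all_classical all_reals.
From mathcomp Require Import exp.
Set Implicit Arguments. Unset Strict Implicit. Unset Printing Implicit Defensive.
Import Order.TTheory GRing.Theory Num.Theory.
Local Open Scope ring_scope.

(* Hopped iterated learning in the Gaussian setting, described through the
   first two moments of the (random) posterior means, as determined by the
   model of the paper.

   State of learner s: (E mu_s, Var mu_s, sigma_s^2).

   Learner t >= 1 picks teacher s uniformly in {0..t-1} (independent of all
   else) and receives m_t i.i.d. data, each with mean E mu_s and variance
   Var mu_s + sigma_s^2 + sigma^2.  With
     mu_t = beta_t/m_t * sum_s chi_{t,s} sum_i d_{t,s,i} + (1 - beta_t) mubar,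
   one gets exactly
     E mu_t   = beta_t * avg_s E mu_s + (1 - beta_t) mubar,
     Var mu_t = beta_t^2 * ( avg_s (Var mu_s + sigma_s^2 + sigma^2) / m_t
                             + avg_s (E mu_s)^2 - (avg_s E mu_s)^2 ),
     sigma_t^2 = 1 / (taubar + m_t tau),
   where avg_s is the average over s = 0..t-1. *)

Section Hopped.
Variable R : realType.
Variables (mubar sigbar sigma mu0 sig0 : R).

Definition tau : R := 1 / sigma ^+ 2.
Definition taubar : R := 1 / sigbar ^+ 2.
Definition beta (m : R) : R := m * tau / (taubar + m * tau).

Definition hop_step (m : R) (h : seq (R * R * R)) : R * R * R :=
  let t : R := (size h)%:R in
  let avg_a := (\sum_(x <- h) x.1.1) / t in
  let avg_a2 := (\sum_(x <- h) x.1.1 ^+ 2) / t in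
  let avg_v := (\sum_(x <- h) (x.1.2 + x.2 + sigma ^+ 2)) / t in
  let b := beta m in
  ( b * avg_a + (1 - b) * mubar,
    b ^+ 2 * (avg_v / m + avg_a2 - avg_a ^+ 2),
    1 / (taubar + m * tau) ).

(* states of learners 0..n; learner 0 has deterministic mean mu0 (so
   E mu_0 = mu0, Var mu_0 = 0) and posterior variance sig0^2 *)
Fixpoint hop_hist (m : nat -> R) (n : nat) : seq (R * R * R) :=
  match n with
  | 0 => [:: (mu0, 0, sig0 ^+ 2)]
  | n'.+1 => let h := hop_hist m n' in rcons h (hop_step (m n) h)
  end.

Definition hop_state (m : nat -> R) (t : nat) : R * R * R :=
  nth (0, 0, 0) (hop_hist m t) t.

Definition E_mu (m : nat -> R) (t : nat) : R := (hop_state m t).1.1.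
Definition Var_mu (m : nat -> R) (t : nat) : R := (hop_state m t).1.2.
Definition post_var (m : nat -> R) (t : nat) : R := (hop_state m t).2.

Definition self_sustaining (m : nat -> R) (eps : R) : Prop :=
  (forall t, `|E_mu m t - mu0| <= eps) /\
  (exists M : R, forall t, post_var m t + Var_mu m t <= M).

End Hopped.

Definition sample_size (R : realType) (B c dist eps sigma sigbar : R)
  (t : nat) : R :=
  (Num.ceil (B * dist / eps * (sigma / sigbar) ^+ 2
             * (1 + ln (t%:R : R)) `^ (1 + c)))%:~R.

(* Main.v *)
Require Import Defs.
From HB Require Import structures.
From mathcomp Require Import all_boot all_order all_algebra.
From mathcomp Require Import all_classical all_reals.
From mathcomp Require Import sequences exp.
From mathcomp Require Import ring lra.
Import Order.TTheory GRing.Theory Num.Theory.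
Local Open Scope ring_scope.

Section Aux.
Variable R : realType.

Lemma ln_sub (x y : R) : 0 < x -> 0 < y -> ln x - ln y <= x / y - 1.
Proof.
move=> x0 y0; rewrite -ln_div ?posrE //.
have := expR_ge1Dx (ln (x / y)); rewrite lnK ?posrE ?divr_gt0 //; lra.
Qed.

Lemma powE (a x : R) : 0 < a -> a `^ x = expR (x * ln a).
Proof. by move=> a0; rewrite /powR gt_eqF. Qed.

Lemma key (c : R) (hc : 0 < c) (j : nat) : (0 < j)%N ->
  1 / ((j.+1)%:R * (1 + ln (j.+1)%:R) `^ (1 + c)) <=
  (1 - (1 + ln (j.+1)%:R) `^ (- c)) / c - (1 - (1 + ln j%:R) `^ (- c)) / c.
Proof.
move=> j0.
set J : R := j%:R.
have J1 : 1 <= J by rewrite /J ler1n.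
have -> : (j.+1)%:R = J + 1 :> R by rewrite -addn1 natrD.
set a := 1 + ln J; set b := 1 + ln (J + 1).
have a1 : 1 <= a by rewrite /a lerDl ln_ge0.
have b1 : 1 <= b by rewrite /b lerDl ln_ge0 //; lra.
have hba : 1 / (J + 1) <= b - a.
  have := ln_sub J (J+1) ltac:(lra) ltac:(lra).
  have -> : J / (J + 1) - 1 = - (1 / (J + 1)) by field; lra.
  rewrite /a /b; lra.
have hlab : (b - a) / b <= ln b - ln a.
  have := ln_sub a b ltac:(lra) ltac:(lra).
  have -> : (b - a) / b = 1 - a / b by field; lra.
  lra.
rewrite !powE; try lra.
set la := ln a; set lb := ln b.
set E := expR (c * lb).
have E0 : 0 < E by rewrite expR_gt0.
have h1 : expR (- c * la) >= E^-1 * (1 + c * (lb - la)).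
  have -> : - c * la = - (c * lb) + c * (lb - la) by ring.
  rewrite expRD expRN -/E; apply: ler_wpM2l; first by rewrite invr_ge0 ltW.
  exact: expR_ge1Dx.
have h2 : expR ((1 + c) * lb) = b * E.
  by rewrite mulrDl mul1r expRD lnK // posrE; lra.
have h3 : expR (- c * lb) = E^-1 by rewrite mulNr expRN.
rewrite h2 h3.
have h4 : 1 / ((J + 1) * (b * E)) = E^-1 * (1 / (J + 1) / b).
  by field; repeat split; lra.
rewrite h4.
have h5 : 1 / (J + 1) / b <= lb - la.
  apply: le_trans hlab.
  by rewrite ler_pM2r ?invr_gt0; lra.
have h6 : E^-1 * (lb - la) = (E^-1 * (1 + c * (lb - la)) - E^-1) / c.
  by field; lra.
apply: (le_trans (y := E^-1 * (lb - la))).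
  by apply: ler_wpM2l; first by rewrite invr_ge0 ltW.
rewrite h6.
have -> : (1 - E^-1) / c - (1 - expR (- c * la)) / c =
          (expR (- c * la) - E^-1) / c by field; lra.
by rewrite ler_pM2r ?invr_gt0 //; lra.
Qed.


Lemma seq_bound (x bt L G : nat -> R) (ka Gm : R) :
  x 0%N = 1 ->
  (forall t, x t.+1 = bt t.+1 * (\sum_(s < t.+1) x s) / (t.+1)%:R) ->
  (forall t, 0 <= bt t.+1 <= 1) ->
  (forall t, 1 - bt t.+1 <= ka / L t.+1) ->
  0 <= ka ->
  (forall t, 1 <= L t.+1) ->
  G 0%N = 0 ->
  (forall t, 1 / ((t.+2)%:R * L t.+1) <= G t.+1 - G t) ->
  (forall t, G t <= Gm) ->
  forall t, 0 <= x t <= 1 /\ 1 - x t <= ka * (1 + Gm).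
Proof.
move=> x0 xS b01 bL ka0 L1 G0 GS Gle.
pose y t := (\sum_(s < t.+1) x s) / (t.+1)%:R.
have Gm0 : 0 <= Gm by rewrite -G0.
have Y : forall t, 0 <= y t <= 1 /\ 1 - y t <= ka * G t.
  elim=> [|t [/andP [y0 y1] IH]].
    rewrite /y big_ord_recr big_ord0 /= x0 G0; split; [apply/andP|]; lra.
  have ey : y t.+1 = y t * ((t.+1)%:R + bt t.+1) / (t.+2)%:R.
    rewrite /y big_ord_recr /= xS.
    have T0 : (t.+1)%:R != 0 :> R by rewrite pnatr_eq0.
    have -> : (t.+2)%:R = (t.+1)%:R + 1 :> R by rewrite -addn1 natrD.
    have T1 : (t.+1)%:R + 1 != 0 :> R.
      have : (0:R) <= (t.+1)%:R by rewrite ler0n.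
      move=> h; apply: lt0r_neq0; lra.
    set S := \sum_(i < t.+1) x i; set TT := (t.+1)%:R in T0 T1 *. field. have t0 : (0:R) <= t%:R by rewrite ler0n. by apply/andP; split; apply: lt0r_neq0; lra.
  have /andP [b0 b1] := b01 t.
  have Lt := L1 t.
  have GSt := GS t.
  have T : 1 <= (t.+1)%:R :> R by rewrite ler1n.
  have e2 : (t.+2)%:R = (t.+1)%:R + 1 :> R by rewrite -addn1 natrD.
  rewrite e2 in GSt.
  rewrite ey e2.
  set T1 := (t.+1)%:R in T GSt *.
  set bb := bt t.+1 in b0 b1 *.
  set LL := L t.+1 in Lt GSt *.
  have hb := bL t; rewrite -/bb -/LL in hb.
  have f1 : y t * (T1 + bb) / (T1 + 1) = y t - y t * (1 - bb) / (T1 + 1).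
    by field; lra.
  have f2 : 0 <= y t * (1 - bb) / (T1 + 1).
    by apply: divr_ge0; [apply: mulr_ge0|]; lra.
  have f3 : y t * (1 - bb) / (T1 + 1) <= ka * (1 / ((T1 + 1) * LL)).
    have -> : ka * (1 / ((T1 + 1) * LL)) = ka / LL / (T1 + 1) by field; lra.
    rewrite ler_pM2r ?invr_gt0; last lra.
    apply: le_trans hb.
    have : y t * (1 - bb) <= 1 * (1 - bb) by apply: ler_wpM2r; lra.
    lra.
  have f4 : ka * (1 / ((T1 + 1) * LL)) <= ka * (G t.+1 - G t).
    by apply: ler_wpM2l.
  have f5 : y t * (1 - bb) / (T1 + 1) <= y t.
    have : y t * (1 - bb) / (T1 + 1) <= y t * 1.
      rewrite -mulrA; apply: ler_wpM2l => //.
      rewrite ler_pdivrMr; lra.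
    lra.
  rewrite f1; split; [apply/andP|]; try lra.
case=> [|t].
  rewrite x0; split; [apply/andP|]; try lra.
  rewrite subrr; apply: mulr_ge0; lra.
have [/andP [y0 y1] Yb] := Y t.
have ex : x t.+1 = bt t.+1 * y t by rewrite xS /y mulrA.
rewrite ex.
have /andP [b0 b1] := b01 t.
have hb := bL t.
have Lt := L1 t.
have kL : ka / L t.+1 <= ka.
  rewrite ler_pdivrMr; last lra.
  have : ka * 1 <= ka * L t.+1 by apply: ler_wpM2l.
  lra.
have kG : ka * G t <= ka * Gm by apply: ler_wpM2l.
have p1 : 0 <= bt t.+1 * y t by apply: mulr_ge0.
have p2 : bt t.+1 * y t <= 1 * 1 by apply: ler_pM.
have p3 : 1 - bt t.+1 * y t = (1 - y t) + (1 - bt t.+1) * y t by ring.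
have p4 : (1 - bt t.+1) * y t <= (1 - bt t.+1) * 1 by apply: ler_wpM2l; lra.
split; [apply/andP|]; try lra.
Qed.


Lemma var_id n (f : nat -> R) (mu : R) : (0 < n)%N ->
  (\sum_(i < n) f i ^+ 2) / n%:R - ((\sum_(i < n) f i) / n%:R) ^+ 2 =
  (\sum_(i < n) (f i - mu) ^+ 2) / n%:R - ((\sum_(i < n) f i) / n%:R - mu) ^+ 2.
Proof.
move=> n0.
have -> : \sum_(i < n) (f i - mu) ^+ 2 =
   \sum_(i < n) (f i ^+ 2 - (f i * mu) *+ 2 + mu ^+ 2).
  by apply: eq_bigr => i _; rewrite sqrrB.
rewrite big_split /= sumrB sumr_const card_ord sumrMnl -mulr_suml.
set S1 := \sum_(i < n) f i ^+ 2; set S2 := \sum_(i < n) f i.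
have N : n%:R != 0 :> R by rewrite pnatr_eq0 -lt0n.

by field.
Qed.

Lemma divle (r a b : R) : 0 <= r -> 0 < a -> a <= b -> r / b <= r / a.
Proof.
move=> r0 a0 ab; apply: ler_wpM2l => //.
by rewrite lef_pV2 // posrE; apply: lt_le_trans ab.
Qed.

Variables (mubar sigbar sigma mu0 sig0 : R) (m : nat -> R).

Lemma hist_map n : hop_hist mubar sigbar sigma mu0 sig0 m n =
  map (hop_state mubar sigbar sigma mu0 sig0 m) (iota 0 n.+1).
Proof.
elim: n => [|n IH] //.
have -> : iota 0 n.+2 = rcons (iota 0 n.+1) n.+1.
  by rewrite -addn1 iotaD add0n /= cats1.
rewrite map_rcons -IH /=; congr rcons.
rewrite /hop_state /= nth_rcons IH size_map size_iota ltnn eqxx.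
by rewrite -IH.
Qed.

Lemma state_S n : hop_state mubar sigbar sigma mu0 sig0 m n.+1 =
  hop_step mubar sigbar sigma (m n.+1)
     (map (hop_state mubar sigbar sigma mu0 sig0 m) (iota 0 n.+1)).
Proof.
rewrite -hist_map /hop_state /= nth_rcons.
by rewrite hist_map size_map size_iota ltnn eqxx.
Qed.

Lemma sum_hist n (F : R * R * R -> R) :
  \sum_(z <- map (hop_state mubar sigbar sigma mu0 sig0 m) (iota 0 n)) F z =
  \sum_(s < n) F (hop_state mubar sigbar sigma mu0 sig0 m s).
Proof.
have -> : iota 0 n = index_iota 0 n by rewrite /index_iota subn0.
by rewrite big_map big_mkord.
Qed.

End Aux.

Lemma step_real (R : realType) (r mm bb Av q2 q3 M s2 e2 sb2 K P : R) :
  0 < r -> 1 <= mm -> bb = mm / (r + mm) -> 0 <= Av -> Av <= M + s2 ->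
  0 <= q2 - q3 -> q2 - q3 <= e2 -> 0 <= P -> P <= sb2 -> 0 <= s2 ->
  M - M / (1 + r) = K -> s2 + e2 + sb2 <= K ->
  0 <= bb ^+ 2 * (Av / mm + q2 - q3) /\ bb ^+ 2 * (Av / mm + q2 - q3) + P <= M.
Proof.
move=> r0 m1 hb A0 A1 q0 q1 P0 P1 s0 hK hs.
have b0 : 0 <= bb by rewrite hb; apply: divr_ge0; lra.
have b1 : bb <= 1 by rewrite hb ler_pdivrMr; lra.
have bb0 : 0 <= bb ^+ 2 by apply: sqr_ge0.
have bb1 : bb ^+ 2 <= 1 by rewrite expr2; have := ler_pM b0 b0 b1 b1; lra.
have e1 : bb ^+ 2 * (Av / mm + q2 - q3) = Av * (bb ^+ 2 / mm) + bb ^+ 2 * (q2 - q3).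
  by field; lra.
have g1 : bb ^+ 2 / mm <= 1 / (1 + r).
  have -> : bb ^+ 2 / mm = mm / (r + mm) ^+ 2 by rewrite hb; field; lra.
  rewrite -subr_le0.
  have -> : mm / (r + mm) ^+ 2 - 1 / (1 + r) =
      (mm * (1 + r) - (r + mm) ^+ 2) * ((r + mm) ^+ 2 * (1 + r))^-1.
    by field; lra.
  apply: mulr_le0_ge0; first nra.
  by rewrite invr_ge0; apply: mulr_ge0; [apply: sqr_ge0 | lra].
have g0 : 0 <= bb ^+ 2 / mm by apply: divr_ge0; lra.
have t1 : Av * (bb ^+ 2 / mm) <= Av * (1 / (1 + r)) by apply: ler_wpM2l.
have t2 : Av * (1 / (1 + r)) <= (M + s2) * (1 / (1 + r)).
  by apply: ler_wpM2r => //; apply: divr_ge0; lra.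
have t3 : (M + s2) * (1 / (1 + r)) = M / (1 + r) + s2 / (1 + r) by field; lra.
have t4 : s2 / (1 + r) <= s2.
  rewrite ler_pdivrMr; last lra.
  have : 0 <= s2 * r by apply: mulr_ge0; lra.
  lra.
have t5 : bb ^+ 2 * (q2 - q3) <= 1 * (q2 - q3) by apply: ler_wpM2r.
have t6 : 0 <= Av * (bb ^+ 2 / mm) by apply: mulr_ge0.
have t7 : 0 <= bb ^+ 2 * (q2 - q3) by apply: mulr_ge0.
rewrite e1; split; lra.
Qed.

Theorem theorem4 (R : realType) (c : R) (hc : 0 < c) :
  exists B : R, 0 < B /\
    forall (mubar sigbar sigma mu0 sig0 : R),
      0 < sigbar -> 0 < sigma -> 0 < sig0 -> mu0 != mubar ->
      forall eps : R, 0 < eps -> eps < `|mu0 - mubar| ->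
        self_sustaining mubar sigbar sigma mu0 sig0
          (sample_size B c `|mu0 - mubar| eps sigma sigbar) eps.
Proof.
have ci : 0 < c^-1 by rewrite invr_gt0.
exists (2 + c^-1); split; first lra.
move=> mubar sigbar sigma mu0 sig0 sb0 s0 sg0 neq eps e0 eD.
set B := 2 + c^-1.
have B0 : 0 < B by rewrite /B; lra.
set D := mu0 - mubar.
have D0 : D != 0 by rewrite /D subr_eq0.
have aD : 0 < `|D| by rewrite normr_gt0.
set m := sample_size B c `|D| eps sigma sigbar.
set r := (sigma / sigbar) ^+ 2.
have r0 : 0 < r by rewrite /r exprn_gt0 // divr_gt0.
pose L (t : nat) := (1 + ln (t%:R : R)) `^ (1 + c).
have lnt0 : forall t : nat, 0 <= ln (t%:R : R).
  case=> [|t]; first by rewrite ln0.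
  by rewrite ln_ge0 // ler1n.
have L1 : forall t, 1 <= L t.
  move=> t; rewrite /L powE; last by have := lnt0 t; lra.
  apply: le_trans (expR_ge1Dx _).
  rewrite lerDl; apply: mulr_ge0; first lra.
  by rewrite ln_ge0 // lerDl.
have Xm : forall t, B * `|D| / eps * r * L t <= m t.
  by move=> t; rewrite /m /sample_size; exact: ceil_ge.
have X0 : forall t, 0 < B * `|D| / eps * r * L t.
  move=> t; have := L1 t => h.
  by apply: mulr_gt0; [apply: mulr_gt0; [apply: divr_gt0; [apply: mulr_gt0|]|]|]; lra.
have m1 : forall t, 1 <= m t.
  move=> t; have h := lt_le_trans (X0 t) (Xm t).
  move: h; rewrite /m /sample_size ltr0z gtz0_ge1 => h.
  by rewrite ler1z.
have tr : taubar sigbar = r * tau sigma.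
  rewrite /taubar /tau /r; field.
  by apply/andP; split; apply: lt0r_neq0.
have tau0 : 0 < tau sigma by rewrite /tau divr_gt0 // exprn_gt0.
have hb : forall t, beta sigbar sigma (m t) = m t / (r + m t).
  move=> t; rewrite /beta tr.
  have := m1 t => h.
  field.
  apply/andP; split; apply: lt0r_neq0; first lra.
  by rewrite -mulrDl; apply: mulr_gt0 => //; lra.
pose x t := (E_mu mubar sigbar sigma mu0 sig0 m t - mubar) / D.
pose bt t := beta sigbar sigma (m t).
pose F (t : nat) := (1 - (1 + ln (t%:R : R)) `^ (- c)) / c.
pose G (t : nat) := F t + 1 - 1 / (t.+1)%:R.
have Hx : forall t, 0 <= x t <= 1 /\ 1 - x t <= eps / (B * `|D|) * (1 + (c^-1 + 1)).
  apply: (@seq_bound _ x bt L G).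
  - by rewrite /x /E_mu /hop_state /= divff.
  - move=> t.
    rewrite {1}/x /E_mu state_S /hop_step !sum_hist size_map size_iota /=.
    rewrite /x -mulr_suml sumrB sumr_const card_ord /bt.
    rewrite /E_mu.
    set S := \sum_(i < t.+1) _.
    have T0 : (t.+1)%:R != 0 :> R by rewrite pnatr_eq0.
    rewrite -mulr_natl.
    field; rewrite D0 andbT; apply: lt0r_neq0; have : (0:R) <= t%:R by rewrite ler0n.
    lra.
  - move=> t; rewrite /bt hb; have := m1 t.+1 => h.
    apply/andP; split; first by apply: divr_ge0; lra.
    by rewrite ler_pdivrMr; lra.
  - move=> t; rewrite /bt hb; have := m1 t.+1 => h.
    have -> : 1 - m t.+1 / (r + m t.+1) = r / (r + m t.+1) by field; lra.
    apply: (le_trans (y := r / m t.+1)); first by apply: divle; lra.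
    apply: (le_trans (y := r / (B * `|D| / eps * r * L t.+1))).
      by apply: divle; [lra | exact: X0 | exact: Xm].
    have := L1 t.+1 => hL.
    have -> : r / (B * `|D| / eps * r * L t.+1) = eps / (B * `|D|) / L t.+1.
      field; rewrite !lt0r_neq0 //; lra.
    by [].
  - by apply: divr_ge0; [lra | apply: mulr_ge0; lra].
  - by move=> t.
  - rewrite /G /F ln0 // addr0 powR1 /=; lra.
  - case=> [|t].
      rewrite /G /F /L /= ln1 addr0 !powR1 /= ln0 //. rewrite addr0 powR1 /=; lra.
    have := @key _ c hc t.+1 isT.
    rewrite /G -/(F t.+2) -/(F t.+1) -/(L t.+2).
    have := L1 t.+2 => hL.
    have e2 : (t.+3)%:R = (t.+2)%:R + 1 :> R by rewrite -addn1 natrD.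
    rewrite e2.
    set T := (t.+2)%:R.
    have T1 : 1 <= T by rewrite /T ler1n.
    move=> hk.
    have h1 : 1 / ((T + 1) * L t.+2) <= 1 / (T * L t.+2).
      apply: divle; first lra.
        by apply: mulr_gt0; lra.
      by apply: ler_wpM2r; lra.
    have h2 : 0 <= 1 / T - 1 / (T + 1).
      have -> : 1 / T - 1 / (T + 1) = 1 / (T * (T + 1)) by field; lra.
      by apply: divr_ge0; [lra | apply: mulr_ge0; lra].
    move: hk h1 h2; set a1 := 1 / ((T + 1) * L t.+2); set a2 := 1 / (T * L t.+2); set u := 1 / T; set v := 1 / (T + 1); set f2 := F t.+2; set f1 := F t.+1; move=> *; lra.
  - move=> t; rewrite /G /F.
    have := powR_ge0 (1 + ln (t%:R : R)) (- c) => p.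
    have h1 : (1 - (1 + ln (t%:R : R)) `^ (- c)) / c <= c^-1.
      by rewrite ler_pdivrMr // mulVf ?lt0r_neq0 //; lra.
    have h2 : 0 <= 1 / (t.+1)%:R :> R by apply: divr_ge0; rewrite ?ler0n.
    move: h1 h2; set a := (1 - _) / c; set b := 1 / _; move=> *; lra.
have P1 : forall t, `|E_mu mubar sigbar sigma mu0 sig0 m t - mu0| <= eps.
  move=> t; have [/andP [x0 x1] hx] := Hx t.
  have -> : E_mu mubar sigbar sigma mu0 sig0 m t - mu0 = D * (x t - 1).
    rewrite /x mulrBr mulr1 mulrC divfK // /D; ring.
  rewrite normrM (ler0_norm (x := x t - 1)); last lra.
  have h1 : `|D| * (1 - x t) <= `|D| * (eps / (B * `|D|) * (1 + (c^-1 + 1))).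
    by apply: ler_wpM2l; lra.
  have h2 : `|D| * (eps / (B * `|D|) * (1 + (c^-1 + 1))) = eps.
    rewrite /B; field.
    by rewrite !lt0r_neq0 //; lra.
  move: h1; rewrite h2 => h1.
  have -> : `|D| * - (x t - 1) = `|D| * (1 - x t) by congr (_ * _); ring.
  exact: h1.
split; first exact: P1.
pose K := sigma ^+ 2 + eps ^+ 2 + sigbar ^+ 2 + sig0 ^+ 2.
have K0 : 0 <= K by rewrite /K; have := sqr_ge0 sigma; have := sqr_ge0 eps;
  have := sqr_ge0 sigbar; have := sqr_ge0 sig0; lra.
pose M := K * (1 + r) / r.
have KM : M - M / (1 + r) = K by rewrite /M; field; rewrite !lt0r_neq0 //; lra.
have MK : K <= M.
  have -> : M = K + K / r by rewrite /M; field; rewrite lt0r_neq0.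
  have : 0 <= K / r by apply: divr_ge0; lra.
  lra.
have Inv : forall t s, (s <= t)%N ->
    0 <= Var_mu mubar sigbar sigma mu0 sig0 m s /\
    0 <= post_var mubar sigbar sigma mu0 sig0 m s /\
    Var_mu mubar sigbar sigma mu0 sig0 m s + post_var mubar sigbar sigma mu0 sig0 m s <= M.
  elim=> [|t IH] s.
    rewrite leqn0 => /eqP ->; rewrite /Var_mu /post_var /hop_state /=.
    have := sqr_ge0 sig0 => h.
    split; first lra; split; first lra.
    rewrite /K in MK; have := sqr_ge0 sigma; have := sqr_ge0 eps;
      have := sqr_ge0 sigbar; lra.
  rewrite leq_eqVlt ltnS => /orP [/eqP -> | hs]; last exact: IH.
  rewrite /Var_mu /post_var !state_S /hop_step !sum_hist size_map size_iota /=.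
  pose E := E_mu mubar sigbar sigma mu0 sig0 m.
  pose VV := Var_mu mubar sigbar sigma mu0 sig0 m.
  pose PP := post_var mubar sigbar sigma mu0 sig0 m.
  have T0 : 0 < (t.+1)%:R :> R by rewrite ltr0n.
  have IH' : forall i : 'I_t.+1, 0 <= VV i /\ 0 <= PP i /\ VV i + PP i <= M.
    by move=> i; apply: IH; rewrite -ltnS ltn_ord.
  have Sv0 : 0 <= (\sum_(i < t.+1) (VV i + PP i + sigma ^+ 2)) / (t.+1)%:R.
    apply: divr_ge0; last by apply: ltW.
    apply: sumr_ge0 => i _; have [h1 [h2 _]] := IH' i.
    have := sqr_ge0 sigma; lra.
  have Sv1 : (\sum_(i < t.+1) (VV i + PP i + sigma ^+ 2)) / (t.+1)%:R <= M + sigma ^+ 2.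
    rewrite ler_pdivrMr //.
    apply: (le_trans (y := \sum_(i < t.+1) (M + sigma ^+ 2))).
      by apply: ler_sum => i _; have [_ [_ h]] := IH' i; lra.
    by rewrite sumr_const card_ord mulr_natr.
  have Qlo : 0 <= (\sum_(i < t.+1) E i ^+ 2) / (t.+1)%:R - ((\sum_(i < t.+1) E i) / (t.+1)%:R) ^+ 2.
    rewrite (var_id _ t.+1 E ((\sum_(i < t.+1) E i) / (t.+1)%:R)) // subrr expr0n /= subr0.
    apply: divr_ge0; last by apply: ltW.
    by apply: sumr_ge0 => i _; apply: sqr_ge0.
  have Qhi : (\sum_(i < t.+1) E i ^+ 2) / (t.+1)%:R - ((\sum_(i < t.+1) E i) / (t.+1)%:R) ^+ 2 <= eps ^+ 2.
    rewrite (var_id _ t.+1 E mu0) //.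
    have : (\sum_(i < t.+1) (E i - mu0) ^+ 2) / (t.+1)%:R <= eps ^+ 2.
      rewrite ler_pdivrMr //.
      apply: (le_trans (y := \sum_(i < t.+1) eps ^+ 2)).
        apply: ler_sum => i _; have := P1 i; rewrite ler_norml => /andP [h1 h2].
        rewrite /E; nra.
      by rewrite sumr_const card_ord mulr_natr.
    have := sqr_ge0 ((\sum_(i < t.+1) E i) / (t.+1)%:R - mu0).
    set u := (_ - mu0) ^+ 2; set w := (\sum_(i < t.+1) (E i - mu0) ^+ 2) / _; lra.
  have mt := m1 t.+1.
  have Plo : 0 <= 1 / (taubar sigbar + m t.+1 * tau sigma).
    apply: divr_ge0; first lra.
    rewrite tr; apply: addr_ge0; apply: mulr_ge0; lra.
  have Phi : 1 / (taubar sigbar + m t.+1 * tau sigma) <= sigbar ^+ 2.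
    have tb : sigbar ^+ 2 * taubar sigbar = 1.
      by rewrite /taubar; field; rewrite lt0r_neq0.
    have tb0 : 0 < taubar sigbar by rewrite tr mulr_gt0.
    have mt0 : 0 <= sigbar ^+ 2 * (m t.+1 * tau sigma).
      by apply: mulr_ge0; [apply: sqr_ge0 | apply: mulr_ge0; lra].
    have mtt : 0 <= m t.+1 * tau sigma by apply: mulr_ge0; lra.
    rewrite ler_pdivrMr; last lra.
    rewrite mulrDr tb; lra.
  have s2 : 0 <= sigma ^+ 2 by apply: sqr_ge0.
  have Kh : sigma ^+ 2 + eps ^+ 2 + sigbar ^+ 2 <= K.
    by rewrite /K; have := sqr_ge0 sig0; lra.
  have [h1 h2] := step_real _ _ _ _ _ _ _ _ _ _ _ _ _ r0 mt (hb t.+1) Sv0 Sv1 Qlo Qhi Plo Phi s2 KM Kh.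
  by split; [exact: h1 | split; [exact: Plo | exact: h2]].
exists M => t.
by have [_ [_ h]] := Inv t t (leqnn t); rewrite addrC.
Qed.
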